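(* In a finite dynamic game as described in the context, suppose $K^i$ is unilaterally sufficient information for player $i$, and let $g^{-i}$ be a fully mixed behavioral strategy profile of the players other than $i$. For $\tau\in\mathcal{T}$ define $$Q_\tau^i(h_\tau^i,u_\tau^i)=\mathbb{E}^{g^{-i}}[R_\tau^i\mid h_\tau^i,u_\tau^i]+\max_{\tilde g_{\tau+1:T}^i}\mathbb{E}^{\tilde g_{\tau+1:T}^i,g^{-i}}\Big[\sum_{t=\tau+1}^T R_t^i\,\Big|\,h_\tau^i,u_\tau^i\Big],$$ the maximum being over behavioral strategies of player $i$ for times $\tau+1,\dots,T$. Then there exists a function $\hat Q_\tau^i:\mathcal{K}_\tau^i\times\mathcal{U}_\tau^i\to[-T,T]$ such that $Q_\tau^i(h_\tau^i,u_\tau^i)=\hat Q_\tau^i(k_\tau^i,u_\tau^i)$, where $k_\tau^i$ is the compression of $h_\tau^i$.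
   Context: Game model: finite set of players $\mathcal{I}$, times $\mathcal{T}=\{1,\dots,T\}$. At time $t$ each player $i$ takes action $U_t^i\in\mathcal{U}_t^i$, obtains reward $R_t^i\in[-1,1]$ and learns new information $Z_t^i\in\mathcal{Z}_t^i$. There is a state $X_t\in\mathcal{X}_t$ with $(X_{t+1},Z_t,R_t)=f_t(X_t,U_t,W_t)$ for fixed functions $f_t$. Primitive random variables $(X_1,H_1)$ and $W_1,\dots,W_T$ are mutually independent with commonly known distributions. All sets are finite. Perfect recall: $H_t^i=(H_1^i,Z_{1:t-1}^i)\in\mathcal{H}_t^i$, and $U_t^i$ is a component of $Z_t^i$. Behavioral strategy $g_t^i:\mathcal{H}_t^i\to\Delta(\mathcal{U}_t^i)$; fully mixed means every action has positive probability at every history. Conditional quantities given $(h_\tau^i,u_\tau^i)$ under $g^{-i}$ alone do not depend on player $i$'s strategy. A realization is admissible under $g$ if it has positive probability under $g$. Compression: $K_1^i=\iota_1^i(H_1^i)$, $K_t^i=\iota_t^i(K_{t-1}^i,Z_{t-1}^i)$ for fixed maps, finite value sets $\mathcal{K}_t^i$. Unilaterally sufficient information (USI): $K^i$ is USI for player $i$ if there exist $F_t^{i,g^i}:\mathcal{K}_t^i\to\Delta(\mathcal{H}_t^i)$ depending only on $g^i$ and $\Phi_t^{i,g^{-i}}:\mathcal{K}_t^i\to\Delta(\mathcal{X}_t\times\mathcal{H}_t^{-i})$ depending only on $g^{-i}$ with $\Pr^g(x_t,h_t\mid k_t^i)=F_t^{i,g^i}(h_t^i\mid k_t^i)\Phi_t^{i,g^{-i}}(x_t,h_t^{-i}\mid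 k_t^i)$ for all behavioral profiles $g$, all $t$, all $k_t^i$ admissible under $g$ (with $x_t,h_t^i,h_t^{-i}$ ranging independently; the left side is $0$ if they disagree on shared components). *)

(* Defs.v *)
From HB Require Import structures.
From mathcomp Require Import all_boot all_order all_algebra.
From mathcomp Require Import reals.
Set Implicit Arguments. Unset Strict Implicit. Unset Printing Implicit Defensive.
Import Order.TTheory GRing.Theory Num.Theory.
Local Open Scope ring_scope.

(* Times are 0-based: t = 0, ..., horizon-1
   correspond to the paper's times 1, ..., T.  The time-dependent finite sets
   X_t, W_t, Z_t^j, U_t^j are all embedded in single finite types; the
   time-dependent action sets U_t^j are the subsets [avail t j]. *)
Record game (R : realType) := Game {
  player : finType;
  horizon : nat;
  state : finType;
  init_info : player -> finType;
  noise : finType;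
  action : player -> finType;
  info : player -> finType;
  avail : nat -> forall j, {set action j};
  P0 : state -> {dffun forall j, init_info j} -> R;  (* law of (X_1, H_1) *)
  PW : nat -> noise -> R;
  dyn : nat -> state -> {dffun forall j, action j} -> noise ->
        state * {dffun forall j, info j} * {ffun player -> R}
}.

Arguments player {R} _.
Arguments horizon {R} _.
Arguments state {R} _.
Arguments init_info {R} _ _.
Arguments noise {R} _.
Arguments action {R} _ _.
Arguments info {R} _ _.
Arguments avail {R} _ _ _.
Arguments P0 {R} _ _ _.
Arguments PW {R} _ _ _.
Arguments dyn {R} _ _ _ _ _.

Section GameDefs.
Variable R : realType.
Variable G : game R.

Local Notation I := (player G).
Local Notation T := (horizon G).
Definition jact := {dffun forall j, action G j}.
Definition jinfo := {dffun forall j, info G j}.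
Definition jinit := {dffun forall j, init_info G j}.

Definition game_ok : Prop :=
  [/\ (forall x h, 0 <= P0 G x h) /\
        \sum_(xh : state G * jinit) P0 G xh.1 xh.2 = 1,
      (forall t, (t < T)%N -> (forall w, 0 <= PW G t w) /\ \sum_w PW G t w = 1),
      (forall t j, (t < T)%N -> avail G t j != finset.set0),
      (forall t x u w j, (t < T)%N -> -1 <= (dyn G t x u w).2 j <= 1) &
      (* perfect recall: U_t^j is a component of Z_t^j *)
      (exists proj : nat -> forall j, info G j -> action G j,
        forall t x (u : jact) w, (t < T)%N -> (forall j, u j \in avail G t j) ->
          forall j, proj t j ((dyn G t x u w).1.2 j) = u j)].

Definition hist_seq j := (init_info G j * seq (info G j))%type.
Definition hist j (t : nat) := (init_info G j * t.-tuple (info G j))%type.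
Definition hseq j t (h : hist j t) : hist_seq j := (h.1, tval h.2).

Definition strategy j := nat -> hist_seq j -> action G j -> R.
Definition profile := forall j, strategy j.

Definition valid_strategy j (s : strategy j) : Prop :=
  forall t, (t < T)%N -> forall h : hist j t,
    [/\ (forall u, 0 <= s t (hseq h) u),
        (forall u, u \notin avail G t j -> s t (hseq h) u = 0) &
        \sum_u s t (hseq h) u = 1].

Definition fully_mixed j (s : strategy j) : Prop :=
  forall t, (t < T)%N -> forall (h : hist j t) u, u \in avail G t j ->
    0 < s t (hseq h) u.

Definition valid_profile (g : profile) := forall j, valid_strategy (g j).

(* sample paths: primitive data plus the actions and noises of all times *)
Definition gpath := (state G * jinit * T.-tuple (jact * noise G))%type.

Record out := Out { o_x : state G; o_z : jinfo; o_r : {ffun I -> R} }.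

Fixpoint run (t : nat) (x : state G) (s : seq (jact * noise G)) : seq out :=
  match s with
  | [::] => [::]
  | uw :: s' => let y := dyn G t x uw.1 uw.2 in
                Out x y.1.2 y.2 :: run t.+1 y.1.1 s'
  end.

Definition outs (p : gpath) := run 0 p.1.1 (tval p.2).
Definition st_at (p : gpath) (t : nat) := nth p.1.1 (map o_x (outs p)) t.
Definition hist_at (p : gpath) j (t : nat) : hist_seq j :=
  (p.1.2 j, take t [seq o_z o j | o <- outs p]).
Definition act_at (p : gpath) (t : 'I_T) j := (tnth p.2 t).1 j.
Definition rew_at (p : gpath) j (t : nat) := nth 0 [seq o_r o j | o <- outs p] t.

Definition path_prob (g : profile) (p : gpath) : R :=
  P0 G p.1.1 p.1.2 *
  \prod_(t < T) ((\prod_j g j t (hist_at p j t) (act_at p t j)) *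
                 PW G t (tnth p.2 t).2).

Definition Pr (g : profile) (E : pred gpath) := \sum_(p | E p) path_prob g p.
Definition CE (g : profile) (E : pred gpath) (Y : gpath -> R) :=
  (\sum_(p | E p) path_prob g p * Y p) / Pr g E.

Definition merge_prof (i : I) (gi g : profile) : profile :=
  fun j => if j == i then gi j else g j.
Definition splice j (tau : nat) (gi gt : strategy j) : strategy j :=
  fun t => if (t <= tau)%N then gi t else gt t.
Definition splice_prof (i : I) (tau : nat) (gi gt : profile) : profile :=
  fun j => splice tau (gi j) (gt j).

Section Player.
Variable i : I.
Variables (K : finType) (iota1 : init_info G i -> K)
          (iota : nat -> K -> info G i -> K).

Fixpoint compr (t : nat) (k : K) (s : seq (info G i)) : K :=
  match s with [::] => k | z :: s' => compr t.+1 (iota t k z) s' end.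
Definition compress (h : hist_seq i) : K := compr 0 (iota1 h.1) h.2.

Definition others_hist (t : nat) :=
  {dffun forall j : {j : I | j != i}, hist (val j) t}.

Definition is_distr (T0 : finType) (m : T0 -> R) :=
  (forall a, 0 <= m a) /\ \sum_a m a = 1.

Definition USI : Prop :=
  exists (F : profile -> forall t : 'I_T, K -> hist i t -> R)
         (Phi : profile -> forall t : 'I_T, K -> state G * others_hist t -> R),
  [/\ (forall g g', valid_profile g -> valid_profile g' -> g i = g' i -> F g = F g'),
      (forall g g', valid_profile g -> valid_profile g' ->
          (forall j, j != i -> g j = g' j) -> Phi g = Phi g') &
      forall g, valid_profile g -> forall (t : 'I_T) (k : K),
        is_distr (F g t k) /\ is_distr (Phi g t k) /\
        (0 < Pr g (fun p => compress (hist_at p i t) == k) ->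
         forall x (hi : hist i t) (ho : others_hist t),
           Pr g (fun p => [&& compress (hist_at p i t) == k, st_at p t == x,
                             hist_at p i t == hseq hi &
                             [forall j, hist_at p (val j) t == hseq (ho j)]])
             / Pr g (fun p => compress (hist_at p i t) == k)
           = F g t k hi * Phi g t k (x, ho))].

Definition event (tau : 'I_T) (h : hist i tau) (u : action G i) : pred gpath :=
  fun p => (hist_at p i tau == hseq h) && (act_at p tau i == u).

(* Q_tau^i(h,u), computed with player i's strategy gi up to time tau and the
   others' profile g (the i-component of g is irrelevant) *)
Definition Qfun (g gi : profile) (tau : 'I_T) (h : hist i tau) (u : action G i) : R :=
  CE (merge_prof i gi g) (event h u) (fun p => rew_at p i tau) +
  sup (fun v => exists gt : profile, valid_strategy (gt i) /\
         v = CE (merge_prof i (splice_prof i tau gi gt) g) (event h u)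
               (fun p => \sum_(t < T | (tau < t)%N) rew_at p i t)).

End Player.
End GameDefs.

(* Main.v *)
Require Import Defs.
From HB Require Import structures.
From mathcomp Require Import all_boot all_order all_algebra.
From mathcomp Require Import reals.
From mathcomp Require Import ring.
From Stdlib Require Import FunctionalExtensionality PropExtensionality ClassicalEpsilon.
Set Implicit Arguments. Unset Strict Implicit. Unset Printing Implicit Defensive.
Import Order.TTheory GRing.Theory Num.Theory.
Local Open Scope ring_scope.

Section Generic.
Variable R : realType.

Lemma sum_tuple0 (X : finType) (F : seq X -> R) :
  \sum_(s : 0.-tuple X) F s = F [::].
Proof.
rewrite (big_pred1 [tuple]) //= => s; apply/esym/eqP; exact: tuple0.
Qed.

Lemma sum_tupleS (X : finType) n (F : seq X -> R) :
  \sum_(s : n.+1.-tuple X) F s = \sum_(a : X) \sum_(s : n.-tuple X) F (a :: s).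
Proof.
rewrite pair_big /=.
rewrite (reindex (fun p : X * n.-tuple X => [tuple of p.1 :: p.2])) /=.
  by [].
exists (fun t : n.+1.-tuple X => (thead t, [tuple of behead t])).
  by move=> [a s] _; congr pair; apply: val_inj.
move=> t _; apply: val_inj => /=; by case: t => [[|a s] //].
Qed.

Lemma sum_tuple_cat (X : finType) n m k (F : seq X -> R) : n = (m + k)%N ->
  \sum_(s : n.-tuple X) F s =
  \sum_(s1 : m.-tuple X) \sum_(s2 : k.-tuple X) F (s1 ++ s2).
Proof.
move=> ->; elim: m F => [|m IH] F.
  by rewrite (sum_tuple0 (fun s1 => \sum_(s2 : k.-tuple X) F (s1 ++ s2))).
rewrite addSn sum_tupleS (sum_tupleS m (fun s1 => \sum_(s2 : k.-tuple X) F (s1 ++ s2))); apply: eq_bigr => a _.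
by rewrite (IH (fun s => F (a :: s))).
Qed.

Lemma sum_dffun_prod (I : finType) (T_ : I -> finType) (f : forall i, T_ i -> R) :
  \sum_(a : {dffun forall i, T_ i}) \prod_i f i (a i) = \prod_i \sum_(b : T_ i) f i b.
Proof.
pose P_ := fun i => [ffun b => f i b].
transitivity (\prod_i \sum_(b : T_ i) P_ i b); last first.
  by apply: eq_bigr => i _; apply: eq_bigr => b _; rewrite ffunE.
under [RHS]eq_bigr do rewrite (big_tag (fun i => P_ i)).
rewrite (bigA_distr_big_dep (fun i => tagged_with T_ i)).
rewrite -(big_fprod 1 +%R P_).
rewrite (reindex (@fprod_of_dffun I T_)); last first.
  by exists (@dffun_of_fprod I T_) => x _; [rewrite fprod_of_dffunK | rewrite dffun_of_fprodK].
apply: eq_bigr => a _; apply: eq_bigr => i _.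
by rewrite /fprod_of_dffun fprodE ffunE.
Qed.

End Generic.

Section Game.
Variable R : realType.
Variable G : game R.
Local Notation T := (horizon G).
Local Notation step := (jact G * noise G)%type.
Local Notation HS := (forall j : player G, hist_seq j).

Fixpoint W (A : profile G) (t : nat) (x : state G) (hs : HS) (s : seq step) : R :=
  if s is aw :: s' then
    (\prod_j A j t (hs j) (aw.1 j)) * PW G t aw.2 *
    W A t.+1 (dyn G t x aw.1 aw.2).1.1
      (fun j => ((hs j).1, rcons (hs j).2 ((dyn G t x aw.1 aw.2).1.2 j))) s'
  else 1.

Fixpoint fin_st (t : nat) (x : state G) (s : seq step) : state G :=
  if s is aw :: s' then fin_st t.+1 (dyn G t x aw.1 aw.2).1.1 s' else x.

Lemma size_run t (x : state G) (s : seq step) : size (run t x s) = size s.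
Proof. by elim: s t x => //= aw s IH t x; rewrite IH. Qed.

Lemma run_cat t (x : state G) (s1 s2 : seq step) :
  run t x (s1 ++ s2) = run t x s1 ++ run (t + size s1) (fin_st t x s1) s2.
Proof.
elim: s1 t x => [|aw s1 IH] t x /=; first by rewrite addn0.
by rewrite IH addSnnS.
Qed.

Definition hcat (hs : HS) (zs : forall j : player G, seq (info G j)) : HS :=
  fun j => ((hs j).1, (hs j).2 ++ zs j).

Definition zrun t (x : state G) (s : seq step) : forall j : player G, seq (info G j) :=
  fun j => map (fun o => o_z o j) (run t x s).

Lemma W_cat A t (x : state G) (hs : HS) (s1 s2 : seq step) :
  W A t x hs (s1 ++ s2) =
  W A t x hs s1 * W A (t + size s1) (fin_st t x s1) (hcat hs (zrun t x s1)) s2.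
Proof.
elim: s1 t x hs => [|aw s1 IH] t x hs /=.
  rewrite mul1r addn0; congr (W _ _ _ _ _).
  by apply: functional_extensionality_dep => j; rewrite /hcat cats0; case: (hs j).
rewrite IH -!mulrA; congr (_ * (_ * (_ * _))).
rewrite addSnnS; congr (W _ _ _ _ _).
apply: functional_extensionality_dep => j.
by rewrite /hcat /zrun /= cat_rcons.
Qed.

Lemma W_prod A t0 (x : state G) (hs : HS) (s : seq step) d :
  W A t0 x hs s = \prod_(t < size s)
    ((\prod_j A j (t0 + t)%N ((hs j).1, (hs j).2 ++ take t (zrun t0 x s j)) ((nth d s t).1 j))
      * PW G (t0 + t)%N (nth d s t).2).
Proof.
elim: s t0 x hs => [|aw s IH] t0 x hs /=; first by rewrite big_ord0.
rewrite big_ord_recl /= IH addn0.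
congr (_ * _ * _).
  by apply: eq_bigr => j _; rewrite cats0; case: (hs j).
apply: eq_bigr => t _; rewrite /bump /= add1n addSnnS; congr (_ * _).
by apply: eq_bigr => j _; rewrite /zrun /= cat_rcons.
Qed.

Definition hs0 (h0 : jinit G) : HS := fun j => (h0 j, [::]).

Lemma path_probE A (p : gpath G) :
  path_prob A p = P0 G p.1.1 p.1.2 * W A 0 p.1.1 (hs0 p.1.2) p.2.
Proof.
rewrite /path_prob; congr (_ * _).
case: p => [[x0 h0] s] /=.
case: (pickP (fun _ : step => true)) => [d _|none]; last first.
  rewrite big1; last by move=> t _; have := none (tnth s t).
  by case: (tval s) => [|aw ?] //=; have := none aw.
rewrite (W_prod _ _ _ _ _ d) /= size_tuple.
apply: eq_bigr => t _; rewrite (tnth_nth d); congr (_ * _).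
apply: eq_bigr => j _; rewrite /act_at (tnth_nth d) /hist_at /outs /=.
by [].
Qed.

Lemma valid_at (j : player G) (s : strategy j) t (hs : hist_seq j) :
  valid_strategy s -> (t < T)%N -> size hs.2 = t ->
  [/\ (forall u, 0 <= s t hs u), (forall u, u \notin avail G t j -> s t hs u = 0) &
      \sum_u s t hs u = 1].
Proof.
case: hs => h0 zs /= V Ht Hs.
have Hz : size zs == t by rewrite Hs.
exact: (V t Ht (h0, Tuple Hz)).
Qed.

Lemma W_norm A : valid_profile A -> (forall t, (t < T)%N -> (forall w, 0 <= PW G t w) /\ \sum_w PW G t w = 1) ->
  forall n t x hs, (t + n <= T)%N -> (forall j, size (hs j).2 = t) ->
  \sum_(s : n.-tuple step) W A t x hs s = 1.
Proof.
move=> VA HPW; elim=> [|n IH] t x hs Htn Hs.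
  by rewrite (sum_tuple0 (fun s => W A t x hs s)).
have Ht : (t < T)%N by apply: leq_trans Htn; rewrite -addSnnS leq_addr.
rewrite (sum_tupleS n (fun s => W A t x hs s)) /=.
transitivity (\sum_(aw : step) (\prod_j A j t (hs j) (aw.1 j)) * PW G t aw.2).
  apply: eq_bigr => aw _; rewrite -big_distrr /= IH ?mulr1 //.
    by rewrite addSnnS.
  by move=> j /=; rewrite size_rcons Hs.
rewrite -(pair_bigA _ (fun (a : jact G) (w : noise G) => (\prod_j A j t (hs j) (a j)) * PW G t w)) /=.
under eq_bigr do rewrite -big_distrr /= (proj2 (HPW t Ht)) mulr1.
rewrite (sum_dffun_prod (fun j b => A j t (hs j) b)).
apply: big1 => j _.
by case: (valid_at (VA j) Ht (Hs j)).
Qed.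

Lemma sum_gpath (F : gpath G -> R) :
  \sum_p F p = \sum_(xh : state G * jinit G) \sum_(s : T.-tuple step) F (xh, s).
Proof. by rewrite pair_bigA; apply: eq_bigr => -[xh s]. Qed.

Definition xm m (p : gpath G) := fin_st 0 p.1.1 (take m p.2).
Definition Hm m (p : gpath G) : HS := hcat (hs0 p.1.2) (zrun 0 p.1.1 (take m p.2)).
Definition E A m (x : state G) (hs : HS) (Z : seq step -> R) :=
  \sum_(s : (T - m).-tuple step) W A m x hs s * Z s.

Lemma prefix_split (A : profile G) m (f : state G -> jinit G -> seq step -> R)
    (Z : state G -> HS -> seq step -> R) : (m <= T)%N ->
  \sum_(p : gpath G) f p.1.1 p.1.2 (take m p.2) * path_prob A p * Z (xm m p) (Hm m p) (drop m p.2) =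
  \sum_(xh : state G * jinit G) \sum_(s1 : m.-tuple step)
     f xh.1 xh.2 s1 * P0 G xh.1 xh.2 * W A 0 xh.1 (hs0 xh.2) s1 *
     E A m (fin_st 0 xh.1 s1) (hcat (hs0 xh.2) (zrun 0 xh.1 s1))
       (Z (fin_st 0 xh.1 s1) (hcat (hs0 xh.2) (zrun 0 xh.1 s1))).
Proof.
move=> Hm_le; rewrite sum_gpath; apply: eq_bigr => -[x0 h0] _ /=.
under eq_bigr do rewrite path_probE /xm /Hm /=.
rewrite (@sum_tuple_cat _ _ _ m (T - m) (fun s => f x0 h0 (take m s) *
     (P0 G x0 h0 * W A 0 x0 (hs0 h0) s) *
     Z (fin_st 0 x0 (take m s)) (hcat (hs0 h0) (zrun 0 x0 (take m s))) (drop m s)));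
  last by rewrite subnKC.
apply: eq_bigr => s1 _; rewrite /E big_distrr /=; apply: eq_bigr => s2 _.
rewrite take_size_cat ?size_tuple // drop_size_cat ?size_tuple //.
rewrite W_cat size_tuple add0n.
rewrite !mulrA; congr (_ * _); rewrite -!mulrA; congr (_ * _); congr (_ * _).
Qed.

Lemma outs_split m (p : gpath G) : (m <= T)%N ->
  outs p = run 0 p.1.1 (take m p.2) ++ run m (xm m p) (drop m p.2).
Proof.
move=> Hm_le; rewrite /outs -{1}(cat_take_drop m (tval p.2)) run_cat /xm.
by rewrite size_takel // size_tuple.
Qed.

Lemma size_outs (p : gpath G) : size (outs p) = T.
Proof. by rewrite /outs size_run size_tuple. Qed.

Lemma st_atE (tau : 'I_T) (p : gpath G) : st_at p tau = xm tau p.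
Proof.
rewrite /st_at (outs_split p (ltnW (ltn_ord tau))) map_cat nth_cat size_map size_run.
rewrite size_takel ?size_tuple ?(ltnW (ltn_ord tau)) // ltnn subnn.
rewrite (drop_nth (tnth p.2 tau)) ?size_tuple //.
Qed.

Lemma hist_atE m (p : gpath G) j : (m <= T)%N -> hist_at p j m = Hm m p j.
Proof.
move=> Hm_le; rewrite /hist_at /Hm /hcat /hs0 /zrun /= (outs_split p Hm_le) map_cat.
by rewrite take_size_cat // size_map size_run size_takel // size_tuple.
Qed.

Lemma rew_atE (tau : 'I_T) (p : gpath G) j t : (tau <= t)%N ->
  rew_at p j t = nth 0 (map (fun o => o_r o j) (run tau (xm tau p) (drop tau p.2))) (t - tau).
Proof.
move=> Ht; rewrite /rew_at (outs_split p (ltnW (ltn_ord tau))) map_cat nth_cat size_map size_run.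
by rewrite size_takel ?size_tuple ?(ltnW (ltn_ord tau)) // ltnNge Ht.
Qed.

Lemma drop_tau (tau : 'I_T) (p : gpath G) :
  drop tau p.2 = tnth p.2 tau :: drop tau.+1 p.2.
Proof. by rewrite (drop_nth (tnth p.2 tau)) ?size_tuple // -tnth_nth. Qed.

Lemma hseq_inj j t : injective (@hseq R G j t).
Proof.
move=> [a s] [b s'] /= [-> E]; congr pair; exact: val_inj.
Qed.

Lemma hist_at_ex (p : gpath G) j t : (t <= T)%N -> exists hj : hist j t, hist_at p j t == hseq hj.
Proof.
move=> Ht.
have Hs : size (take t [seq o_z o j | o <- outs p]) == t.
  by rewrite size_takel // size_map size_outs.
by exists (p.1.2 j, Tuple Hs).
Qed.

Section Player.
Variable i : player G.
Variable tau : 'I_T.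
Variable u : action G i.

Definition cls (x : state G) (h : hist i tau) (ho : others_hist i tau) (p : gpath G) :=
  [&& st_at p tau == x, hist_at p i tau == hseq h &
      [forall j, hist_at p (val j) tau == hseq (ho j)]].

Definition ho_of (p : gpath G) : others_hist i tau :=
  [ffun j : {j : player G | j != i} => xchoose (hist_at_ex p (val j) (ltnW (ltn_ord tau)))].

Lemma ho_ofP (p : gpath G) (ho : others_hist i tau) :
  [forall j, hist_at p (val j) tau == hseq (ho j)] = (ho == ho_of p).
Proof.
apply/idP/idP => [/forallP H|/eqP ->].
  apply/eqP/ffunP => j; rewrite ffunE; apply: hseq_inj.
  have := xchooseP (hist_at_ex p (val j) (ltnW (ltn_ord tau))).
  by move/eqP <-; move/eqP: (H j) <-.
by apply/forallP => j; rewrite ffunE; exact: (xchooseP (hist_at_ex p (val j) (ltnW (ltn_ord tau)))).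
Qed.

Lemma partition_event (h : hist i tau) (F : gpath G -> R) :
  \sum_(p | event h u p) F p =
  \sum_(x : state G) \sum_(ho : others_hist i tau)
     \sum_(p | cls x h ho p && (act_at p tau i == u)) F p.
Proof.
transitivity (\sum_(p : gpath G) \sum_(x : state G) \sum_(ho : others_hist i tau)
     (if cls x h ho p && (act_at p tau i == u) then F p else 0)); last first.
  rewrite exchange_big; apply: eq_bigr => x _.
  rewrite exchange_big; apply: eq_bigr => ho _.
  by rewrite [RHS]big_mkcond.
rewrite big_mkcond; apply: eq_bigr => p _.
rewrite (bigD1 (st_at p tau)) //= [X in _ + X]big1 ?addr0; last first.
  move=> x Hx; apply: big1 => ho _; by rewrite /cls eq_sym (negbTE Hx).
rewrite (bigD1 (ho_of p)) //= [X in _ + X]big1 ?addr0; last first.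
  move=> ho Hho; by rewrite /cls ho_ofP (negbTE Hho) !andbF.
by rewrite /cls /event eqxx ho_ofP eqxx /= andbT.
Qed.

Lemma tau_le : (tau <= T)%N. Proof. exact: ltnW (ltn_ord tau). Qed.

Lemma cls_alt x h ho (p0 p : gpath G) : cls x h ho p0 ->
  cls x h ho p = (xm tau p == x) && [forall j, Hm tau p j == Hm tau p0 j].
Proof.
case/and3P => /eqP Hx /eqP Hh /forallP Ho.
rewrite /cls st_atE hist_atE ?tau_le // -Hh hist_atE ?tau_le //.
have -> : [forall j, hist_at p (val j) tau == hseq (ho j)] =
          [forall j : {j : player G | j != i}, Hm tau p (val j) == Hm tau p0 (val j)].
  apply: eq_forallb => j; rewrite hist_atE ?tau_le //.
  by move/eqP: (Ho j) <-; rewrite hist_atE ?tau_le.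
congr andb; apply/andP/forallP => [[/eqP Hi /forallP Hj] j|Hj].
  case: (eqVneq j i) => [->|ne]; first by rewrite Hi.
  exact: (Hj (exist _ j ne)).
split; first exact: Hj.
by apply/forallP => j; exact: Hj.
Qed.

Definition Pre (A : profile G) (x : state G) (H0 : HS) : R :=
  \sum_(xh : state G * jinit G) \sum_(s1 : tau.-tuple step)
    P0 G xh.1 xh.2 * W A 0 xh.1 (hs0 xh.2) s1 *
    ((fin_st 0 xh.1 s1 == x) && [forall j, hcat (hs0 xh.2) (zrun 0 xh.1 s1) j == H0 j])%:R.

Lemma E_scale A m x H c Z : E A m x H (fun s => c * Z s) = c * E A m x H Z.
Proof. by rewrite /E big_distrr; apply: eq_bigr => s _; rewrite mulrCA. Qed.

Lemma cls_sum (A : profile G) x h ho p0 (Z0 : seq step -> R) : cls x h ho p0 ->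
  \sum_(p | cls x h ho p) path_prob A p * Z0 (drop tau p.2) =
  Pre A x (Hm tau p0) * E A tau x (Hm tau p0) Z0.
Proof.
move=> Hp0; set H0 := Hm tau p0.
pose Zc (x' : state G) (H' : HS) (s2 : seq step) :=
  ((x' == x) && [forall j, H' j == H0 j])%:R * Z0 s2.
transitivity (\sum_(p : gpath G) (fun _ _ _ => 1) p.1.1 p.1.2 (take tau p.2) * path_prob A p *
   Zc (xm tau p) (Hm tau p) (drop tau p.2)).
  rewrite big_mkcond; apply: eq_bigr => p _.
  rewrite (cls_alt p Hp0) /Zc; case: ifP => _; first by rewrite mul1r mul1r.
  by rewrite mul0r mulr0.
rewrite (@prefix_split A tau (fun _ _ _ => 1) Zc tau_le) /Pre big_distrl; apply: eq_bigr => xh _.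
rewrite big_distrl; apply: eq_bigr => s1 _ /=.
rewrite mul1r /Zc E_scale; case: andP => [[/eqP -> /forallP Hf]|_].
  have -> : hcat (hs0 xh.2) (zrun 0 xh.1 s1) = H0.
    by apply: functional_extensionality_dep => j; apply/eqP; exact: Hf.
  by rewrite mul1r mulr1.
by rewrite !mul0r !mulr0 mul0r.
Qed.

Definition nxH (H : HS) (x : state G) (aw : step) : HS :=
  fun j => ((H j).1, rcons (H j).2 ((dyn G tau x aw.1 aw.2).1.2 j)).

Definition Et (A : profile G) (x : state G) (H : HS) (Z : seq step -> R) : R :=
  \sum_(aw : step) ((aw.1 i == u)%:R * (\prod_(j | j != i) A j tau (H j) (aw.1 j)) *
     PW G tau aw.2 *
     \sum_(s : (T - tau.+1).-tuple step)
        W A tau.+1 (dyn G tau x aw.1 aw.2).1.1 (nxH H x aw) s * Z (aw :: s)).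

Lemma sum_tuple_eqS (X : finType) n k (F : seq X -> R) : n = k.+1 ->
  \sum_(s : n.-tuple X) F s = \sum_(a : X) \sum_(s : k.-tuple X) F (a :: s).
Proof. by move=> ->; exact: sum_tupleS. Qed.

Lemma T_tau : (T - tau = (T - tau.+1).+1)%N.
Proof. by rewrite subnSK. Qed.

Lemma E_first A x H Z :
  E A tau x H (fun s => if s is aw :: _ then (aw.1 i == u)%:R * Z s else 0) =
  A i tau (H i) u * Et A x H Z.
Proof.
rewrite /E (sum_tuple_eqS (fun s => W A tau x H s *
   (if s is aw :: _ then (aw.1 i == u)%:R * Z s else 0)) T_tau).
rewrite /Et big_distrr; apply: eq_bigr => aw _ /=.
rewrite big_distrr big_distrr; apply: eq_bigr => s _ /=.
rewrite (bigD1 i) //=.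
case: eqP => [->|_]; last by rewrite !mul0r !mulr0 ?mul0r.
by rewrite /nxH !mul1r !mulrA.
Qed.

Definition pwok := forall t, (t < T)%N -> (forall w, 0 <= PW G t w) /\ \sum_w PW G t w = 1.

Lemma size_Hm m (p : gpath G) j : (m <= T)%N -> size (Hm m p j).2 = m.
Proof. by move=> Hm_le; rewrite /Hm /hcat /hs0 /zrun /= size_map size_run size_takel // size_tuple. Qed.

Lemma E1 (A : profile G) x (p0 : gpath G) : valid_profile A -> pwok ->
  E A tau x (Hm tau p0) (fun _ => 1) = 1.
Proof.
move=> VA HPW; rewrite /E; under eq_bigr do rewrite mulr1.
apply: W_norm => //; first by rewrite subnKC ?tau_le.
by move=> j; rewrite size_Hm ?tau_le.
Qed.

Lemma Pr_cls (A : profile G) x h ho p0 : valid_profile A -> pwok -> cls x h ho p0 ->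
  Pr A (cls x h ho) = Pre A x (Hm tau p0).
Proof.
move=> VA HPW Hp0; have := cls_sum A (fun _ => 1) Hp0.
rewrite E1 // mulr1 => <-; rewrite /Pr; apply: eq_bigr => p _; by rewrite mulr1.
Qed.

Lemma N_cls (A : profile G) x h ho p0 (Yf : state G -> seq step -> R) (Y : gpath G -> R) :
  valid_profile A -> pwok -> (forall p, Y p = Yf (st_at p tau) (drop tau p.2)) ->
  cls x h ho p0 ->
  \sum_(p | cls x h ho p && (act_at p tau i == u)) path_prob A p * Y p =
  Pr A (cls x h ho) * (A i tau (hseq h) u * Et A x (Hm tau p0) (Yf x)).
Proof.
move=> VA HPW HY Hp0.
have Hh : hseq h = Hm tau p0 i.
  by case/and3P: Hp0 => _ /eqP <- _; rewrite hist_atE ?tau_le.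
rewrite Hh -E_first (Pr_cls VA HPW Hp0) -(cls_sum _ _ Hp0).
rewrite big_mkcondr /=; apply: eq_bigr => p Hc.
rewrite HY drop_tau /=; move: Hc => /and3P [/eqP -> _ _].
rewrite /act_at; case: eqP => _; last by rewrite mul0r mulr0.
by rewrite mul1r.
Qed.

Definition p0ok := forall x h, 0 <= P0 G x h.

Lemma pp_ge0 (A : profile G) (p : gpath G) : valid_profile A -> p0ok -> pwok ->
  0 <= path_prob A p.
Proof.
move=> VA HP0 HPW; rewrite /path_prob mulr_ge0 //; apply: prodr_ge0 => t _.
apply: mulr_ge0; last by case: (HPW t (ltn_ord t)) => H _; exact: H.
apply: prodr_ge0 => j _.
have Hs : size (hist_at p j t).2 = t.
  by rewrite /hist_at /= size_takel // size_map size_outs ltnW.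
by case: (valid_at (VA j) (ltn_ord t) Hs) => H _ _; exact: H.
Qed.

Variables (K : finType) (iota1 : init_info G i -> K) (iota : nat -> K -> info G i -> K).

Definition kev (k : K) (p : gpath G) := compress iota1 iota (hist_at p i tau) == k.
Definition clsk (k : K) x (hi : hist i tau) (ho : others_hist i tau) (p : gpath G) :=
  [&& compress iota1 iota (hist_at p i tau) == k, st_at p tau == x,
      hist_at p i tau == hseq hi &
      [forall j, hist_at p (val j) tau == hseq (ho j)]].

Definition et (A : profile G) (h : hist i tau) x ho (Yf : state G -> seq step -> R) :=
  if [pick p | cls x h ho p] is Some p0 then Et A x (Hm tau p0) (Yf x) else 0.

Definition Ssum (Phiv : state G * others_hist i tau -> R) (A : profile G) h Yf :=
  \sum_(x : state G) \sum_(ho : others_hist i tau) Phiv (x, ho) * et A h x ho Yf.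

Lemma formula (A : profile G) (Fv : hist i tau -> R)
    (Phiv : state G * others_hist i tau -> R) (h : hist i tau) :
  valid_profile A -> p0ok -> pwok ->
  (0 < Pr A (kev (compress iota1 iota (hseq h))) -> forall x ho,
     Pr A (clsk (compress iota1 iota (hseq h)) x h ho) /
       Pr A (kev (compress iota1 iota (hseq h))) = Fv h * Phiv (x, ho)) ->
  0 < Pr A (event h u) ->
  [/\ Pr A (kev (compress iota1 iota (hseq h))) * Fv h != 0,
      A i tau (hseq h) u != 0,
      (forall x ho, Pr A (cls x h ho) =
         Pr A (kev (compress iota1 iota (hseq h))) * Fv h * Phiv (x, ho)) &
      (forall Yf Y, (forall p, Y p = Yf (st_at p tau) (drop tau p.2)) ->
         \sum_(p | event h u p) path_prob A p * Y p =
         A i tau (hseq h) u * (Pr A (kev (compress iota1 iota (hseq h))) * Fv h) *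
         Ssum Phiv A h Yf)].
Proof.
move=> VA HP0 HPW HU Hpos.
set k := compress iota1 iota (hseq h).
have Pk : 0 < Pr A (kev k).
  apply: (lt_le_trans Hpos); rewrite /Pr [X in X <= _]big_mkcond [X in _ <= X]big_mkcond.
  apply: ler_sum => p _; rewrite /event /kev.
  case: eqP => [->|_] /=; last by case: ifP => _ //; exact: pp_ge0.
  by rewrite /k eqxx; case: ifP => _ //; exact: pp_ge0.
have Hcls : forall x ho, Pr A (cls x h ho) = Pr A (kev k) * Fv h * Phiv (x, ho).
  move=> x ho; rewrite -mulrA -(HU Pk x ho) mulrC divfK ?gt_eqF //.
  apply: eq_bigl => p; rewrite /clsk /cls.
  case: (hist_at p i tau =P hseq h) => [->|_]; first by rewrite /k eqxx.
  by rewrite !andbF.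
have HN : forall Yf Y, (forall p, Y p = Yf (st_at p tau) (drop tau p.2)) ->
     \sum_(p | event h u p) path_prob A p * Y p =
     A i tau (hseq h) u * (Pr A (kev k) * Fv h) * Ssum Phiv A h Yf.
  move=> Yf Y HY; rewrite partition_event /Ssum big_distrr; apply: eq_bigr => x _.
  rewrite big_distrr; apply: eq_bigr => ho _; rewrite /et.
  case: pickP => [p0 Hp0|none].
    rewrite (N_cls VA HPW HY Hp0) Hcls /=; by rewrite [LHS]mulrCA !mulrA.
  rewrite big_pred0; last by move=> p; rewrite none.
  by apply/esym; rewrite mulr0; exact: mulr0.
have HD := HN (fun _ _ => 1) (fun _ => 1) (fun _ => erefl).
have : Pr A (event h u) = A i tau (hseq h) u * (Pr A (kev k) * Fv h) * Ssum Phiv A h (fun _ _ => 1).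
  by rewrite -HD /Pr; apply: eq_bigr => p _; rewrite mulr1.
move=> HD'; move: Hpos; rewrite HD' => Hpos.
split => //.
- by apply/eqP => E0; move: Hpos; rewrite E0 mulr0 mul0r ltxx.
- by apply/eqP => E0; move: Hpos; rewrite E0 !mul0r ltxx.
Qed.

Lemma CE_formula (A : profile G) (Fv : hist i tau -> R)
    (Phiv : state G * others_hist i tau -> R) (h : hist i tau) Yf Y :
  valid_profile A -> p0ok -> pwok ->
  (0 < Pr A (kev (compress iota1 iota (hseq h))) -> forall x ho,
     Pr A (clsk (compress iota1 iota (hseq h)) x h ho) /
       Pr A (kev (compress iota1 iota (hseq h))) = Fv h * Phiv (x, ho)) ->
  0 < Pr A (event h u) ->
  (forall p, Y p = Yf (st_at p tau) (drop tau p.2)) ->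
  CE A (event h u) Y = Ssum Phiv A h Yf / Ssum Phiv A h (fun _ _ => 1).
Proof.
move=> VA HP0 HPW HU Hpos HY.
have [Hc Ha _ HN] := formula VA HP0 HPW HU Hpos.
rewrite /CE (HN _ _ HY).
have -> : Pr A (event h u) = \sum_(p | event h u p) path_prob A p * 1.
  by apply: eq_bigr => p _; rewrite mulr1.
rewrite (HN (fun _ _ => 1) (fun _ => 1)) // invfM mulrACA mulfV ?mul1r //.
by rewrite mulf_neq0.
Qed.

Lemma S_eq (A A' : profile G) (Fv Fv' : hist i tau -> R)
    (Phiv : state G * others_hist i tau -> R) (h h' : hist i tau) Yf :
  valid_profile A -> valid_profile A' -> p0ok -> pwok ->
  compress iota1 iota (hseq h) = compress iota1 iota (hseq h') ->
  (0 < Pr A (kev (compress iota1 iota (hseq h))) -> forall x ho,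
     Pr A (clsk (compress iota1 iota (hseq h)) x h ho) /
       Pr A (kev (compress iota1 iota (hseq h))) = Fv h * Phiv (x, ho)) ->
  (0 < Pr A' (kev (compress iota1 iota (hseq h'))) -> forall x ho,
     Pr A' (clsk (compress iota1 iota (hseq h')) x h' ho) /
       Pr A' (kev (compress iota1 iota (hseq h'))) = Fv' h' * Phiv (x, ho)) ->
  0 < Pr A (event h u) -> 0 < Pr A' (event h' u) ->
  (forall x ho p0 q0, cls x h ho p0 -> cls x h' ho q0 ->
     Et A x (Hm tau p0) (Yf x) = Et A' x (Hm tau q0) (Yf x)) ->
  Ssum Phiv A h Yf = Ssum Phiv A' h' Yf.
Proof.
move=> VA VA' HP0 HPW Hk HU HU' Hpos Hpos' HE.
have [Hc _ Hcls _] := formula VA HP0 HPW HU Hpos.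
have [Hc' _ Hcls' _] := formula VA' HP0 HPW HU' Hpos'.
rewrite /Ssum; apply: eq_bigr => x _; apply: eq_bigr => ho _.
have [->|Hphi] := eqVneq (Phiv (x, ho)) 0; first by rewrite !mul0r.
congr (_ * _); rewrite /et.
case: pickP => [p0 Hp0|none]; last first.
  move: (Hcls x ho); rewrite /Pr big_pred0 // => /esym/eqP.
  by rewrite mulf_eq0 (negbTE Hc) (negbTE Hphi).
case: pickP => [q0 Hq0|none]; last first.
  move: (Hcls' x ho); rewrite /Pr big_pred0 // => /esym/eqP.
  by rewrite mulf_eq0 (negbTE Hc') (negbTE Hphi).
exact: (HE x ho p0 q0 Hp0 Hq0).
Qed.

Lemma W_trans (A A' : profile G) (hh hh' : hist_seq i) :
  (forall j, j != i -> A j = A' j) ->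
  (forall t zs, (tau < t)%N -> A i t (hh.1, hh.2 ++ zs) = A' i t (hh'.1, hh'.2 ++ zs)) ->
  forall s t x (hs hs' : HS) zs, (tau < t)%N -> (forall j, j != i -> hs j = hs' j) ->
  hs i = (hh.1, hh.2 ++ zs) -> hs' i = (hh'.1, hh'.2 ++ zs) ->
  W A t x hs s = W A' t x hs' s.
Proof.
move=> HA Htr; elim=> [|aw s IH] t x hs hs' zs Ht Hj Hi Hi' //=.
congr (_ * _ * _).
  apply: eq_bigr => j _; case: (eqVneq j i) => [->|ne].
    by rewrite Hi Hi' Htr.
  by rewrite (HA j ne) (Hj j ne).
apply: (IH _ _ _ _ (rcons zs ((dyn G t x aw.1 aw.2).1.2 i))).
- exact: ltnW.
- by move=> j ne /=; rewrite (Hj j ne).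
- by rewrite /= Hi /= rcons_cat.
- by rewrite /= Hi' /= rcons_cat.
Qed.

Lemma Et_trans (A A' : profile G) x (H H' : HS) Z :
  (forall j, j != i -> A j = A' j) ->
  (forall t zs, (tau < t)%N -> A i t ((H i).1, (H i).2 ++ zs) = A' i t ((H' i).1, (H' i).2 ++ zs)) ->
  (forall j, j != i -> H j = H' j) ->
  Et A x H Z = Et A' x H' Z.
Proof.
move=> HA Htr Hj; rewrite /Et; apply: eq_bigr => aw _.
congr (_ * _ * _ * _).
  apply: eq_bigr => j ne; by rewrite (HA j ne) (Hj j ne).
apply: eq_bigr => s _; congr (_ * _).
have := (@W_trans A A' (H i) (H' i) HA Htr (tval s) tau.+1 (dyn G tau x aw.1 aw.2).1.1 (nxH H x aw) (nxH H' x aw) [:: (dyn G tau x aw.1 aw.2).1.2 i]). apply => //.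
- by move=> j ne; rewrite /nxH (Hj j ne).
- by rewrite /nxH /= -cats1; case: (H i).
- by rewrite /nxH /= -cats1; case: (H' i).
Qed.

Lemma Et_first (A : profile G) x (H : HS) Z (y : step -> R) :
  valid_profile A -> pwok -> (forall j, size (H j).2 = tau) ->
  (forall aw s, Z (aw :: s) = y aw) ->
  Et A x H Z = \sum_(aw : step) ((aw.1 i == u)%:R * (\prod_(j | j != i) A j tau (H j) (aw.1 j)) *
     PW G tau aw.2 * y aw).
Proof.
move=> VA HPW Hs HZ; rewrite /Et; apply: eq_bigr => aw _; congr (_ * _).
under eq_bigr do rewrite HZ.
rewrite -big_distrl /= W_norm ?mul1r //.
  by rewrite subnKC.
by move=> j; rewrite /nxH /= size_rcons Hs.
Qed.

Lemma W_agree (A B : profile G) : forall s t x (hs : HS),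
  (forall j t', (t <= t')%N -> (t' < t + size s)%N -> A j t' = B j t') ->
  W A t x hs s = W B t x hs s.
Proof.
elim=> [|aw s IH] t x hs HAB //=.
congr (_ * _ * _).
  apply: eq_bigr => j _; rewrite HAB // addnS ltnS leq_addr //.
apply: IH => j t' H1 H2; apply: HAB; first exact: ltnW.
by rewrite /= addnS -addSn.
Qed.

Lemma Pre_agree (A B : profile G) x H0 :
  (forall j t', (t' < tau)%N -> A j t' = B j t') -> Pre A x H0 = Pre B x H0.
Proof.
move=> HAB; rewrite /Pre; apply: eq_bigr => xh _; apply: eq_bigr => s1 _.
rewrite (W_agree (B := B)) // => j t' _; rewrite size_tuple add0n; exact: HAB.
Qed.

Lemma Hm_i x h ho (p0 : gpath G) : cls x h ho p0 -> Hm tau p0 i = hseq h.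
Proof. by case/and3P => _ /eqP <- _; rewrite hist_atE ?tau_le. Qed.

Lemma Hm_eq x h h' ho (p0 q0 : gpath G) : cls x h ho p0 -> cls x h' ho q0 ->
  forall j, j != i -> Hm tau p0 j = Hm tau q0 j.
Proof.
case/and3P => _ _ /forallP H1; case/and3P => _ _ /forallP H2 j ne.
rewrite -!hist_atE ?tau_le //.
by move/eqP: (H1 (exist _ j ne)) => /= ->; move/eqP: (H2 (exist _ j ne)) => /= ->.
Qed.

Lemma Et1 (A : profile G) x (H : HS) :
  valid_profile A -> pwok -> (forall j, size (H j).2 = tau) ->
  Et A x H (fun _ => 1) = \sum_(aw : step) ((aw.1 i == u)%:R *
     (\prod_(j | j != i) A j tau (H j) (aw.1 j)) * PW G tau aw.2 * 1).
Proof. by move=> VA HPW Hs; apply: Et_first. Qed.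

Lemma Pr_event_agree (A B : profile G) (h : hist i tau) :
  valid_profile A -> valid_profile B -> pwok ->
  (forall j t', (t' <= tau)%N -> A j t' = B j t') ->
  Pr A (event h u) = Pr B (event h u).
Proof.
move=> VA VB HPW HAB.
have -> : Pr A (event h u) = \sum_(p | event h u p) path_prob A p * 1.
  by apply: eq_bigr => p _; rewrite mulr1.
have -> : Pr B (event h u) = \sum_(p | event h u p) path_prob B p * 1.
  by apply: eq_bigr => p _; rewrite mulr1.
rewrite !partition_event; apply: eq_bigr => x _; apply: eq_bigr => ho _.
case: (pickP (cls x h ho)) => [p0 Hp0|none]; last first.
  by rewrite !big_pred0 // => p; rewrite none.
have HY : forall p : gpath G, (fun _ : gpath G => (1:R)) p = (fun (_ : state G) (_ : seq step) => (1:R)) (st_at p tau) (drop tau p.2) by [].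
have EA : \sum_(p | cls x h ho p && (act_at p tau i == u)) path_prob A p * 1 =
  Pr A (cls x h ho) * (A i tau (hseq h) u * Et A x (Hm tau p0) (fun _ => 1)) :=
  N_cls VA HPW HY Hp0.
have EB : \sum_(p | cls x h ho p && (act_at p tau i == u)) path_prob B p * 1 =
  Pr B (cls x h ho) * (B i tau (hseq h) u * Et B x (Hm tau p0) (fun _ => 1)) :=
  N_cls VB HPW HY Hp0.
rewrite EA EB.
rewrite (Pr_cls VA HPW Hp0) (Pr_cls VB HPW Hp0) (Pre_agree (B := B)); last first.
  by move=> j t' Ht; apply: HAB; apply: ltnW.
rewrite HAB //; congr (_ * (_ * _)).
have Hs : forall j, size (Hm tau p0 j).2 = tau by move=> j; rewrite size_Hm ?tau_le.
rewrite (Et1 _ VA HPW Hs) (Et1 _ VB HPW Hs); apply: eq_bigr => aw _.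
congr (_ * _ * _ * _); apply: eq_bigr => j _; by rewrite HAB.
Qed.

Definition Yf0 (x : state G) (s2 : seq step) : R :=
  nth 0 (map (fun o => o_r o i) (run tau x s2)) 0.
Definition Yff (x : state G) (s2 : seq step) : R :=
  \sum_(t < T | (tau < t)%N) nth 0 (map (fun o => o_r o i) (run tau x s2)) (t - tau).

Lemma Y0_rep (p : gpath G) : rew_at p i tau = Yf0 (st_at p tau) (drop tau p.2).
Proof. by rewrite (@rew_atE tau) // subnn st_atE. Qed.

Lemma Yf_rep (p : gpath G) :
  \sum_(t < T | (tau < t)%N) rew_at p i t = Yff (st_at p tau) (drop tau p.2).
Proof. by rewrite /Yff st_atE; apply: eq_bigr => t Ht; rewrite (@rew_atE tau) // ltnW. Qed.

Definition trans (h h' : hist i tau) (s : strategy i) : strategy i :=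
  fun t hs => if (tau < t)%N && (hs.1 == h'.1) && (take tau hs.2 == tval h'.2)
              then s t (h.1, tval h.2 ++ drop tau hs.2) else s t hs.

Definition tr_prof (h h' : hist i tau) (gt : profile G) : profile G := fun j =>
  match i =P j with
  | ReflectT e => eq_rect i (fun j => strategy j) (trans h h' (gt i)) j e
  | ReflectF _ => gt j
  end.
Arguments tr_prof : clear implicits.

Lemma tr_prof_i h h' (gt : profile G) : tr_prof h h' gt i = trans h h' (gt i).
Proof. by rewrite /tr_prof; case: (i =P i) => // e; rewrite (eq_axiomK e). Qed.

Lemma valid_trans h h' s : valid_strategy s -> valid_strategy (trans h h' s).
Proof.
move=> V t Ht hh; rewrite /trans.
case: ifP => [/andP [/andP [Htt _] _]|_]; last exact: V.
apply: valid_at V Ht _.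
by rewrite /= size_cat size_tuple size_drop /= size_tuple subnKC // ltnW.
Qed.

Lemma valid_merge (gi g : profile G) : valid_strategy (gi i) ->
  (forall j, j != i -> valid_strategy (g j)) -> valid_profile (merge_prof i gi g).
Proof.
move=> Vi Vg j; rewrite /merge_prof.
case: (eqVneq j i) => [->|ne]; first exact: Vi.
exact: Vg.
Qed.

Lemma valid_splice (j : player G) (s1 s2 : strategy j) :
  valid_strategy s1 -> valid_strategy s2 -> valid_strategy (splice tau s1 s2).
Proof. by move=> V1 V2 t Ht hh; rewrite /splice; case: ifP => _; [exact: V1|exact: V2]. Qed.

Lemma merge_off (gi g : profile G) j : j != i -> @merge_prof _ _ i gi g j = g j.
Proof. by move=> ne; rewrite /merge_prof (negbTE ne). Qed.

Lemma merge_on (gi g : profile G) : @merge_prof _ _ i gi g i = gi i.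
Proof. by rewrite /merge_prof eqxx. Qed.

Definition USIfacts (F : profile G -> forall t : 'I_T, K -> hist i t -> R)
    (Phi : profile G -> forall t : 'I_T, K -> state G * others_hist i t -> R) :=
  forall g, valid_profile g -> forall (t : 'I_T) (k : K),
    is_distr (F g t k) /\ is_distr (Phi g t k) /\
    (0 < Pr g (fun p => compress iota1 iota (hist_at p i t) == k) ->
     forall x (hi : hist i t) (ho : others_hist i t),
       Pr g (fun p => [&& compress iota1 iota (hist_at p i t) == k, st_at p t == x,
                         hist_at p i t == hseq hi &
                         [forall j, hist_at p (val j) t == hseq (ho j)]])
         / Pr g (fun p => compress iota1 iota (hist_at p i t) == k)
       = F g t k hi * Phi g t k (x, ho)).

Lemma CE_eq_gen (A A' : profile G) (h h' : hist i tau) Yf (Y : gpath G -> R)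
    F Phi :
  (forall g g', valid_profile g -> valid_profile g' ->
     (forall j, j != i -> g j = g' j) -> Phi g = Phi g') ->
  USIfacts F Phi ->
  valid_profile A -> valid_profile A' -> p0ok -> pwok ->
  (forall j, j != i -> A j = A' j) ->
  compress iota1 iota (hseq h) = compress iota1 iota (hseq h') ->
  0 < Pr A (event h u) -> 0 < Pr A' (event h' u) ->
  (forall p, Y p = Yf (st_at p tau) (drop tau p.2)) ->
  (forall Z x ho p0 q0, cls x h ho p0 -> cls x h' ho q0 ->
     (Z = Yf x \/ Z = (fun _ => 1)) ->
     Et A x (Hm tau p0) Z = Et A' x (Hm tau q0) Z) ->
  CE A (event h u) Y = CE A' (event h' u) Y.
Proof.
move=> HPhi HUSI VA VA' HP0 HPW HAA' Hk PA PA' HY HE.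
have EPhi : Phi A' = Phi A by apply: HPhi => // j ne; rewrite HAA'.
set k := compress iota1 iota (hseq h).
have HU : 0 < Pr A (kev k) -> forall x ho,
     Pr A (clsk k x h ho) / Pr A (kev k) = F A tau k h * Phi A tau k (x, ho) :=
  fun Pk x ho => (HUSI A VA tau k).2.2 Pk x h ho.
have HU'' : 0 < Pr A' (kev (compress iota1 iota (hseq h'))) -> forall x ho,
     Pr A' (clsk (compress iota1 iota (hseq h')) x h' ho) /
       Pr A' (kev (compress iota1 iota (hseq h'))) = F A' tau k h' * Phi A tau k (x, ho).
  rewrite -Hk -EPhi => Pk x ho; exact: ((HUSI A' VA' tau k).2.2 Pk x h' ho).
rewrite (CE_formula VA HP0 HPW HU PA HY) (CE_formula VA' HP0 HPW HU'' PA' HY).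
congr (_ / _).
  apply: (S_eq VA VA' HP0 HPW Hk HU HU'' PA PA') => x ho p0 q0 Hp Hq.
  exact: HE Hp Hq (or_introl erefl).
apply: (S_eq VA VA' HP0 HPW Hk HU HU'' PA PA') => x ho p0 q0 Hp Hq.
exact: HE Hp Hq (or_intror erefl).
Qed.

Lemma Et_first_eq (A A' : profile G) x (H H' : HS) Z (y : step -> R) :
  valid_profile A -> valid_profile A' -> pwok ->
  (forall j, size (H j).2 = tau) -> (forall j, size (H' j).2 = tau) ->
  (forall j, j != i -> A j = A' j) -> (forall j, j != i -> H j = H' j) ->
  (forall aw s, Z (aw :: s) = y aw) ->
  Et A x H Z = Et A' x H' Z.
Proof.
move=> VA VA' HPW Hs Hs' HA HH HZ.
rewrite (Et_first x VA HPW Hs HZ) (Et_first x VA' HPW Hs' HZ).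
apply: eq_bigr => aw _; congr (_ * _ * _ * _).
by apply: eq_bigr => j ne; rewrite (HA j ne) (HH j ne).
Qed.

Lemma CE0_eq (g gi gi' : profile G) (h h' : hist i tau) F Phi :
  (forall g g', valid_profile g -> valid_profile g' ->
     (forall j, j != i -> g j = g' j) -> Phi g = Phi g') ->
  USIfacts F Phi -> p0ok -> pwok ->
  (forall j, j != i -> valid_strategy (g j)) ->
  valid_strategy (gi i) -> valid_strategy (gi' i) ->
  compress iota1 iota (hseq h) = compress iota1 iota (hseq h') ->
  0 < Pr (merge_prof i gi g) (event h u) -> 0 < Pr (merge_prof i gi' g) (event h' u) ->
  CE (merge_prof i gi g) (event h u) (fun p => rew_at p i tau) =
  CE (merge_prof i gi' g) (event h' u) (fun p => rew_at p i tau).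
Proof.
move=> HPhi HUSI HP0 HPW Vg Vi Vi' Hk P1 P2.
have VA := valid_merge Vi Vg; have VA' := valid_merge Vi' Vg.
have HAA : forall j, j != i -> @merge_prof _ _ i gi g j = @merge_prof _ _ i gi' g j.
  by move=> j ne; rewrite !merge_off.
apply: (CE_eq_gen HPhi HUSI VA VA' HP0 HPW HAA Hk P1 P2 Y0_rep).
move=> Z x ho p0 q0 Hp Hq HZ.
have Hs : forall (q : gpath G) j, size (Hm tau q j).2 = tau by move=> q j; rewrite size_Hm ?tau_le.
case: HZ => ->.
  apply: (@Et_first_eq _ _ x _ _ _ (fun aw => (dyn G tau x aw.1 aw.2).2 i)) => //.
  exact: Hm_eq Hp Hq.
apply: (@Et_first_eq _ _ x _ _ _ (fun _ => 1)) => //.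
exact: Hm_eq Hp Hq.
Qed.

Definition Yfut (p : gpath G) : R := \sum_(t < T | (tau < t)%N) rew_at p i t.

Lemma sup_dir (g gi gi' gt : profile G) (h h' : hist i tau) F Phi :
  (forall g g', valid_profile g -> valid_profile g' ->
     (forall j, j != i -> g j = g' j) -> Phi g = Phi g') ->
  USIfacts F Phi -> p0ok -> pwok ->
  (forall j, j != i -> valid_strategy (g j)) ->
  valid_strategy (gi i) -> valid_strategy (gi' i) ->
  compress iota1 iota (hseq h) = compress iota1 iota (hseq h') ->
  0 < Pr (merge_prof i gi g) (event h u) -> 0 < Pr (merge_prof i gi' g) (event h' u) ->
  valid_strategy (gt i) ->
  exists gt' : profile G, valid_strategy (gt' i) /\
    CE (merge_prof i (splice_prof i tau gi gt) g) (event h u) Yfut =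
    CE (merge_prof i (splice_prof i tau gi' gt') g) (event h' u) Yfut.
Proof.
move=> HPhi HUSI HP0 HPW Vg Vi Vi' Hk P1 P2 Vt.
have Vt' : valid_strategy (tr_prof h h' gt i) by rewrite tr_prof_i; exact: valid_trans.
exists (tr_prof h h' gt); split => //.
have VA : valid_profile (merge_prof i (splice_prof i tau gi gt) g).
  by apply: valid_merge => //; exact: valid_splice.
have VA' : valid_profile (merge_prof i (splice_prof i tau gi' (tr_prof h h' gt)) g).
  by apply: valid_merge => //; exact: valid_splice.
have PA : 0 < Pr (merge_prof i (splice_prof i tau gi gt) g) (event h u).
  rewrite (Pr_event_agree _ VA (valid_merge Vi Vg) HPW) //.
  by move=> j t' Ht'; rewrite /merge_prof /splice_prof /splice; case: ifP => // _; rewrite Ht'.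
have PA' : 0 < Pr (merge_prof i (splice_prof i tau gi' (tr_prof h h' gt)) g) (event h' u).
  rewrite (Pr_event_agree _ VA' (valid_merge Vi' Vg) HPW) //.
  by move=> j t' Ht'; rewrite /merge_prof /splice_prof /splice; case: ifP => // _; rewrite Ht'.
have HAA : forall j, j != i -> @merge_prof _ _ i (splice_prof i tau gi gt) g j =
                               @merge_prof _ _ i (splice_prof i tau gi' (tr_prof h h' gt)) g j.
  by move=> j ne; rewrite !merge_off.
apply: (CE_eq_gen HPhi HUSI VA VA' HP0 HPW HAA Hk PA PA' Yf_rep).
move=> Z x ho p0 q0 Hp Hq _.
apply: Et_trans => //; last exact: Hm_eq Hp Hq.
move=> t zs Ht; rewrite (Hm_i Hp) (Hm_i Hq) !merge_on /splice_prof /splice.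
rewrite leqNgt Ht /= tr_prof_i /trans Ht eqxx /= take_size_cat ?size_tuple // eqxx.
by rewrite drop_size_cat ?size_tuple.
Qed.

Lemma Qfun_eq (g gi gi' : profile G) (h h' : hist i tau) F Phi :
  (forall g g', valid_profile g -> valid_profile g' ->
     (forall j, j != i -> g j = g' j) -> Phi g = Phi g') ->
  USIfacts F Phi -> p0ok -> pwok ->
  (forall j, j != i -> valid_strategy (g j)) ->
  valid_strategy (gi i) -> valid_strategy (gi' i) ->
  compress iota1 iota (hseq h) = compress iota1 iota (hseq h') ->
  0 < Pr (merge_prof i gi g) (event h u) -> 0 < Pr (merge_prof i gi' g) (event h' u) ->
  Qfun g gi h u = Qfun g gi' h' u.
Proof.
move=> HPhi HUSI HP0 HPW Vg Vi Vi' Hk P1 P2.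
rewrite /Qfun (CE0_eq HPhi HUSI HP0 HPW Vg Vi Vi' Hk P1 P2); congr (_ + sup _).
apply: functional_extensionality => v; apply: propositional_extensionality; split.
  move=> [gt [Vt ->]].
  have [gt' [Vt' E]] := sup_dir HPhi HUSI HP0 HPW Vg Vi Vi' Hk P1 P2 Vt.
  by exists gt'; split => //; exact: E.
move=> [gt [Vt ->]].
have [gt' [Vt' E]] := sup_dir HPhi HUSI HP0 HPW Vg Vi' Vi (esym Hk) P2 P1 Vt.
by exists gt'; split => //; exact: E.
Qed.

Definition rewok := forall t x uu w j, (t < T)%N -> -1 <= (dyn G t x uu w).2 j <= 1.

Lemma CE_bound (A : profile G) (Ev : pred (gpath G)) (Y : gpath G -> R) (M : R) :
  valid_profile A -> p0ok -> pwok -> 0 <= M -> (forall p, `|Y p| <= M) ->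
  `|CE A Ev Y| <= M.
Proof.
move=> VA HP0 HPW HM HY; rewrite /CE.
have Pge0 : 0 <= Pr A Ev by apply: sumr_ge0 => p _; exact: pp_ge0.
have [->|nz] := eqVneq (Pr A Ev) 0; first by rewrite invr0 mulr0 normr0.
have Ppos : 0 < Pr A Ev by rewrite lt_def nz Pge0.
rewrite normrM normfV (ger0_norm Pge0) ler_pdivrMr //.
apply: le_trans (ler_norm_sum _ _ _) _.
rewrite /Pr big_distrr /=; apply: ler_sum => p _.
rewrite normrM (ger0_norm (pp_ge0 _ VA HP0 HPW)) mulrC.
by apply: ler_wpM2r => //; exact: pp_ge0.
Qed.

Lemma run_rew_bound j : rewok -> forall (s : seq step) t0 x k, (t0 + size s <= T)%N ->
  `|nth 0 (map (fun o => o_r o j) (run t0 x s)) k| <= 1.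
Proof.
move=> Hr; elim=> [|aw s IH] t0 x k Hs /=; first by rewrite nth_nil normr0 ler01.
case: k => [|k] /=.
  by rewrite ler_norml; apply: Hr; rewrite -addn1 (leq_trans _ Hs) // leq_add2l.
by apply: IH; rewrite addSnnS.
Qed.

Lemma rew_bound j (p : gpath G) t : rewok -> `|rew_at p j t| <= 1.
Proof. by move=> Hr; apply: run_rew_bound => //; rewrite add0n size_tuple. Qed.

Lemma count_bound n m : \sum_(t < n | (m < t)%N) (1 : R) <= (n.-1)%:R.
Proof.
case: n => [|n]; first by rewrite big_ord0.
rewrite big_mkcond big_ord_recl /= add0r.
apply: le_trans (_ : \sum_(t < n) (1 : R) <= _).
  by apply: ler_sum => t _; case: ifP.
by rewrite sumr_const card_ord.
Qed.

Lemma Yfut_bound (p : gpath G) : rewok -> `|Yfut p| <= (T.-1)%:R.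
Proof.
move=> Hr; rewrite /Yfut; apply: le_trans (ler_norm_sum _ _ _) _.
apply: le_trans (count_bound T tau); apply: ler_sum => t _; exact: rew_bound.
Qed.

Lemma Qfun_bound (g gi : profile G) (h : hist i tau) :
  p0ok -> pwok -> rewok ->
  (forall j, j != i -> valid_strategy (g j)) -> valid_strategy (gi i) ->
  `|Qfun g gi h u| <= T%:R.
Proof.
move=> HP0 HPW Hr Vg Vi.
have HM : 0 <= (T.-1)%:R :> R by [].
pose S := fun v : R => exists gt : profile G, valid_strategy (gt i) /\
   v = CE (merge_prof i (splice_prof i tau gi gt) g) (event h u)
         (fun p => \sum_(t < T | (tau < t)%N) rew_at p i t).
have HS : forall v, S v -> `|v| <= (T.-1)%:R.
  move=> v [gt [Vt ->]]; apply: CE_bound => //.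
    by apply: valid_merge => //; exact: valid_splice.
  move=> p; exact: Yfut_bound.
have S0 : S (CE (merge_prof i (splice_prof i tau gi gi) g) (event h u) Yfut).
  by exists gi.
have Hsup : `|sup S| <= (T.-1)%:R.
  rewrite ler_norml; apply/andP; split.
    apply: le_trans (_ : - (T.-1)%:R <= CE (merge_prof i (splice_prof i tau gi gi) g) (event h u) Yfut) _.
      by have := HS _ S0; rewrite ler_norml => /andP [].
    apply: ub_le_sup => //; exists (T.-1)%:R => v Sv.
    by have := HS _ Sv; rewrite ler_norml => /andP [].
  apply: ge_sup; first by exists (CE (merge_prof i (splice_prof i tau gi gi) g) (event h u) Yfut).
  by move=> v Sv; have := HS _ Sv; rewrite ler_norml => /andP [].
have H0 : `|CE (merge_prof i gi g) (event h u) (fun p => rew_at p i tau)| <= 1.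
  apply: CE_bound => //; first exact: valid_merge.
  move=> p; exact: rew_bound.
rewrite /Qfun -/S; apply: le_trans (ler_normD _ _) _.
have -> : (T%:R : R) = 1 + (T.-1)%:R.
  by rewrite -mulrS prednK // (leq_ltn_trans _ (ltn_ord tau)).
by rewrite lerD.
Qed.

End Player.

End Game.

Theorem lemma10 (R : realType) (G : game R) (i : player G)
  (K : finType) (iota1 : init_info G i -> K)
  (iota : nat -> K -> info G i -> K) (g : profile G) :
  game_ok G ->
  USI iota1 iota ->
  (forall j, j != i -> valid_strategy (g j) /\ fully_mixed (g j)) ->
  forall tau : 'I_(horizon G),
  exists Qhat : K -> action G i -> R,
    (forall k u, - (horizon G)%:R <= Qhat k u <= (horizon G)%:R) /\
    (forall (gi : profile G), valid_strategy (gi i) ->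
     forall (h : hist i tau) (u : action G i),
       0 < Pr (merge_prof i gi g) (event h u) ->
       Qfun g gi h u = Qhat (compress iota1 iota (hseq h)) u).
Proof.
move=> Gok Husi Hg tau.
have [[HP0 _] HPW _ Hr _] := Gok.
have [F [Phi [_ HPhi HUSI]]] := Husi.
have Vg : forall j, j != i -> valid_strategy (g j) := fun j ne => (Hg j ne).1.
pose P (k : K) (a : action G i) (w : profile G * hist i tau) :=
  [/\ valid_strategy (w.1 i), 0 < Pr (merge_prof i w.1 g) (event w.2 a) &
      compress iota1 iota (hseq w.2) = k].
exists (fun k a => match excluded_middle_informative (exists w, P k a w) with
  | left e => let w := proj1_sig (constructive_indefinite_description _ e) in Qfun g w.1 w.2 a
  | right _ => 0 end).
split.
  move=> k a; case: excluded_middle_informative => [e|_]; last first.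
    by rewrite oppr_le0 ler0n.
  case: (constructive_indefinite_description _ e) => w [Vw Pw Kw] /=.
  by rewrite -ler_norml; apply: Qfun_bound.
move=> gi Vi h a Hpos.
case: excluded_middle_informative => [e|ne]; last first.
  by exfalso; apply: ne; exists (gi, h); split.
case: (constructive_indefinite_description _ e) => w [Vw Pw Kw] /=.
exact: (Qfun_eq HPhi HUSI HP0 HPW Vg Vi Vw (esym Kw) Hpos Pw).
Qed.
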